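(* Let $n\ge 1$, let $\mathbf{Q}\in\mathbb{R}^{n\times n}$ be symmetric, $\mathbf{c}\in\mathbb{R}^n$, $\mathbf{v}\in\mathbb{R}^n_+$, $V_c>0$ and $\beta>0$. Let $\mathcal{Z}_b=\{\mathbf{z}\in\mathbb{R}^n:\ \mathbf{v}^T\mathbf{z}\le V_c\}$ and $$P_\beta(\mathbf{z})=\tfrac12\mathbf{z}^T\mathbf{Q}\mathbf{z}+\tfrac12\beta\|\mathbf{z}\circ\mathbf{z}-\mathbf{z}\|^2-\mathbf{c}^T\mathbf{z}.$$ For $\boldsymbol{\zeta}=(\boldsymbol{\sigma},\tau)\in\mathbb{R}^n\times\mathbb{R}$ put $\mathbf{G}(\boldsymbol{\sigma})=\mathbf{Q}+2\,\mathrm{Diag}(\boldsymbol{\sigma})$, $\boldsymbol{\psi}(\boldsymbol{\sigma},\tau)=\mathbf{c}-\tau\mathbf{v}+\boldsymbol{\sigma}$, $$\Xi_\beta(\mathbf{z},\boldsymbol{\sigma},\tau)=\tfrac12\mathbf{z}^T\mathbf{G}(\boldsymbol{\sigma})\mathbf{z}-\tfrac12\beta^{-1}\|\boldsymbol{\sigma}\|^2-\mathbf{z}^T\boldsymbol{\psi}(\boldsymbol{\sigma},\tau)-\tau V_c,$$ $\mathcal{S}_a^+=\{(\boldsymbol{\sigma},\tau)\in\mathbb{R}^{n+1}:\ \mathbf{G}(\boldsymbol{\sigma})\succ 0,\ \tau>0\}$, and for $\boldsymbol{\zeta}\in\mathcal{S}_a^+$ $$P^d_\beta(\boldsymbol{\zeta})=-\tfrac12\boldsymbol{\psi}(\boldsymbol{\zeta})^T\mathbf{G}(\boldsymbol{\sigma})^{-1}\boldsymbol{\psi}(\boldsymbol{\zeta})-\tfrac12\beta^{-1}\|\boldsymbol{\sigma}\|^2-\tau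 V_c.$$ If $(\mathbf{z}_\beta,\boldsymbol{\zeta}_\beta)\in\mathbb{R}^n\times\mathcal{S}_a^+$ is a KKT point of $\Xi_\beta$, then $\mathbf{z}_\beta$ is a global minimizer of $P_\beta$ over $\mathcal{Z}_b$, $\boldsymbol{\zeta}_\beta$ is a maximizer of $P^d_\beta$ over $\mathcal{S}_a^+$, and $$P_\beta(\mathbf{z}_\beta)=\min_{\mathbf{z}\in\mathcal{Z}_b}P_\beta(\mathbf{z})=\Xi_\beta(\mathbf{z}_\beta,\boldsymbol{\zeta}_\beta)=\max_{\boldsymbol{\zeta}\in\mathcal{S}_a^+}P^d_\beta(\boldsymbol{\zeta})=P^d_\beta(\boldsymbol{\zeta}_\beta).$$
   Context: $\mathbf{z}\circ\mathbf{z}$ denotes the componentwise square $\{z_i^2\}$, and $\mathrm{Diag}(\boldsymbol{\sigma})$ is the diagonal matrix with diagonal $\boldsymbol{\sigma}$. A KKT point $(\mathbf{z},\boldsymbol{\sigma},\tau)$ of $\Xi_\beta$ means: $\nabla_{\mathbf{z}}\Xi_\beta=0$, $\nabla_{\boldsymbol{\sigma}}\Xi_\beta=0$, and $\mathbf{v}^T\mathbf{z}\le V_c$, $\tau\ge 0$, $\tau(\mathbf{v}^T\mathbf{z}-V_c)=0$. This is the penalty relaxation of the quadratic knapsack problem $\min\{\tfrac12\mathbf{z}^T\mathbf{Q}\mathbf{z}-\mathbf{c}^T\mathbf{z}:\ \mathbf{z}\in\{0,1\}^n,\ \mathbf{v}^T\mathbf{z}\le V_c\}$. *)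

(* Defs.v *)
From HB Require Import structures.
From mathcomp Require Import all_boot all_order all_algebra.
From mathcomp Require Import all_classical all_reals all_analysis.
Set Implicit Arguments. Unset Strict Implicit. Unset Printing Implicit Defensive.
Import Order.TTheory GRing.Theory Num.Theory.
Import numFieldNormedType.Exports.
Local Open Scope ring_scope.

Section QKP.
Variables (R : realType) (n : nat).
Implicit Types (Q A : 'M[R]_n) (x y z c v s : 'cV[R]_n).

Definition dotv x y : R := (x^T *m y) 0 0.
Definition qform A x : R := (x^T *m A *m x) 0 0.
Definition sqnorm x : R := dotv x x.
Definition hsq z : 'cV[R]_n := \col_i (z i 0 ^+ 2).
Definition Diagv s : 'M[R]_n := diag_mx s^T.
Definition posdef A : Prop := forall x, x != 0 -> 0 < qform A x.

Definition Zb v (Vc : R) z : Prop := dotv v z <= Vc.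

Definition Pbeta Q c (beta : R) z : R :=
  qform Q z / 2 + beta * sqnorm (hsq z - z) / 2 - dotv c z.

Definition Gmat Q s : 'M[R]_n := Q + 2 *: Diagv s.
Definition psi c v s (tau : R) : 'cV[R]_n := c - tau *: v + s.

Definition Xi Q c v (Vc beta : R) z s (tau : R) : R :=
  qform (Gmat Q s) z / 2 - beta^-1 * sqnorm s / 2 - dotv z (psi c v s tau)
  - tau * Vc.

Definition Sa_plus Q s (tau : R) : Prop := posdef (Gmat Q s) /\ 0 < tau.

Definition Pd Q c v (Vc beta : R) s (tau : R) : R :=
  - qform (invmx (Gmat Q s)) (psi c v s tau) / 2 - beta^-1 * sqnorm s / 2
  - tau * Vc.

Definition KKT_Xi Q c v (Vc beta : R) z s (tau : R) : Prop :=
  [/\ forall d : 'cV[R]_n,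
        is_derive z d (fun z' => Xi Q c v Vc beta z' s tau) 0,
      forall d : 'cV[R]_n,
        is_derive s d (fun s' => Xi Q c v Vc beta z s' tau) 0,
      dotv v z <= Vc, 0 <= tau & tau * (dotv v z - Vc) = 0].

End QKP.

(* Main.v *)
Require Import Defs.
From HB Require Import structures.
From mathcomp Require Import all_boot all_order all_algebra.
From mathcomp Require Import all_classical all_reals all_analysis.
From mathcomp Require Import ring lra.
Import Order.TTheory GRing.Theory Num.Theory.
Import numFieldNormedType.Exports.
Local Open Scope ring_scope.
Local Open Scope classical_set_scope.
Set Implicit Arguments. Unset Strict Implicit.

Lemma quad_deriv (R : realType) (V : normedModType R) (f : V -> R) x d (a b : R) :
  (forall h : R, f (h *: d + x) = f x + h * a + h^+2 * b) -> is_derive x d f 0 -> a = 0.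
Proof.
move=> Hf [_ Hd]; rewrite -Hd /derive.
have E : forall h : R, h != 0 -> h^-1 *: ((f \o shift x) (h *: d) - f x) = a + h * b.
  move=> h h0 /=. rewrite Hf [_ *: _]/GRing.scale /=. field. done.
apply/esym/cvg_lim => //.
apply: (@cvg_trans _ ((fun h => a + h * b) @ 0^')).
  apply: near_eq_cvg; near=> h; rewrite E //.
  near: h; exact: nbhs_dnbhs_neq.
apply: cvg_within_filter.
have : (fun h : R => a + h * b) @ (0:R) --> a + 0 * b.
  apply: cvgD; first exact: cvg_cst.
  apply: cvgMl; exact: cvg_id.
by rewrite mul0r addr0.
Unshelve. all: by end_near.
Qed.


Section Lin.
Variables (R : realType) (n : nat).
Implicit Types (A Q : 'M[R]_n) (x y z d w s : 'cV[R]_n).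

Lemma dotvE x y : dotv x y = \sum_i x i 0 * y i 0.
Proof. by rewrite /dotv mxE; apply: eq_bigr => i _; rewrite mxE. Qed.

Lemma dotvC x y : dotv x y = dotv y x.
Proof. by rewrite !dotvE; apply: eq_bigr => i _; rewrite mulrC. Qed.

Lemma dotvDl x y z : dotv (x + y) z = dotv x z + dotv y z.
Proof. by rewrite !dotvE -big_split; apply: eq_bigr => i _; rewrite !mxE mulrDl. Qed.

Lemma dotvZl (k : R) x y : dotv (k *: x) y = k * dotv x y.
Proof. by rewrite !dotvE mulr_sumr; apply: eq_bigr => i _; rewrite !mxE mulrA. Qed.

Lemma dotvNl x y : dotv (- x) y = - dotv x y.
Proof. by rewrite -scaleN1r dotvZl mulN1r. Qed.

Lemma dotvDr x y z : dotv z (x + y) = dotv z x + dotv z y.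
Proof. by rewrite dotvC dotvDl !(dotvC z). Qed.

Lemma dotvZr (k : R) x y : dotv y (k *: x) = k * dotv y x.
Proof. by rewrite dotvC dotvZl dotvC. Qed.

Lemma dotvNr x y : dotv y (- x) = - dotv y x.
Proof. by rewrite dotvC dotvNl dotvC. Qed.

Lemma dotv_delta (i : 'I_n) w : dotv (delta_mx i 0) w = w i 0.
Proof.
rewrite dotvE (bigD1 i) //= big1 ?addr0 => [|j ji]; rewrite !mxE ?eqxx ?mul1r //.
by rewrite (negbTE ji) mul0r.
Qed.

Lemma sqnorm_ge0 x : 0 <= sqnorm x.
Proof. rewrite /sqnorm dotvE; apply: sumr_ge0 => i _. by rewrite -expr2 sqr_ge0. Qed.

Lemma qformE A x : qform A x = dotv x (A *m x).
Proof. by rewrite /qform /dotv mulmxA. Qed.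

Lemma m11_tr (M : 'M[R]_1) : M 0 0 = (M^T) 0 0.
Proof. by rewrite mxE. Qed.

Lemma dotv_sym A x y : A^T = A -> dotv x (A *m y) = dotv y (A *m x).
Proof.
move=> sA; rewrite /dotv m11_tr.
by rewrite !trmx_mul trmxK sA mulmxA.
Qed.

Lemma qform_add A x y : A^T = A ->
  qform A (x + y) = qform A x + 2 * dotv x (A *m y) + qform A y.
Proof.
move=> sA; rewrite !qformE mulmxDr !dotvDl !dotvDr (dotv_sym y x sA).
ring.
Qed.

Lemma qformZ A (k : R) x : qform A (k *: x) = k ^+ 2 * qform A x.
Proof. by rewrite !qformE -scalemxAr dotvZl dotvZr expr2 mulrA. Qed.

Lemma qformMD A B x : qform (A + B) x = qform A x + qform B x.
Proof. by rewrite !qformE mulmxDl dotvDr. Qed.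

Lemma qformMZ A (k : R) x : qform (k *: A) x = k * qform A x.
Proof. by rewrite !qformE -scalemxAl dotvZr. Qed.

Lemma qform_Diag s z : qform (Diagv s) z = dotv s (hsq z).
Proof.
rewrite qformE !dotvE; apply: eq_bigr => i _.
rewrite /Diagv mul_diag_mx !mxE; ring.
Qed.

Lemma Diagv_sym s : (Diagv s)^T = Diagv s.
Proof. by rewrite /Diagv tr_diag_mx. Qed.

Lemma Gmat_sym Q s : Q^T = Q -> (Gmat Q s)^T = Gmat Q s.
Proof. by move=> sQ; rewrite /Gmat linearD /= linearZ /= Diagv_sym sQ. Qed.


Lemma qform0 A : qform A 0 = 0.
Proof. by rewrite /qform mulmx0 mxE. Qed.

Lemma posdef_ge0 A x : posdef A -> 0 <= qform A x.
Proof.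
move=> PD; case: (eqVneq x 0) => [->|x0]; first by rewrite qform0.
exact/ltW/PD.
Qed.

Variables (Q : 'M[R]_n) (c v : 'cV[R]_n) (Vc beta : R).

Lemma Xi_z_shift (h : R) d z s tau : 0 < beta -> Q^T = Q ->
  Xi Q c v Vc beta (h *: d + z) s tau = Xi Q c v Vc beta z s tau
   + h * (dotv d (Gmat Q s *m z) - dotv d (psi c v s tau))
   + h ^+ 2 * (qform (Gmat Q s) d / 2).
Proof.
move=> b0 sQ; rewrite /Xi qform_add ?Gmat_sym // qformZ dotvDl !dotvZl.
field; by rewrite gt_eqF.
Qed.

Lemma Xi_s_shift (h : R) d z s tau :
  0 < beta -> Xi Q c v Vc beta z (h *: d + s) tau = Xi Q c v Vc beta z s tau
   + h * (dotv d (hsq z) - beta^-1 * dotv d s - dotv d z)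
   + h ^+ 2 * (- beta^-1 * sqnorm d / 2).
Proof.
move=> b0; rewrite /Xi /Gmat /psi !qformMD !qformMZ !qform_Diag /sqnorm.
rewrite !dotvDl !dotvDr !dotvZl !dotvZr (dotvC s d) (dotvC z d).
field; by rewrite gt_eqF.
Qed.

Lemma grad_z z s tau : 0 < beta -> Q^T = Q ->
  (forall d, is_derive z d (fun z' => Xi Q c v Vc beta z' s tau) 0) ->
  Gmat Q s *m z = psi c v s tau.
Proof.
move=> b0 sQ H; apply/matrixP => i j; rewrite (ord1 j).
have := @quad_deriv _ _ _ _ _ _ _ (fun h => Xi_z_shift h (delta_mx i 0) z s tau b0 sQ) (H (delta_mx i 0)).
by rewrite !dotv_delta => /eqP; rewrite subr_eq0 => /eqP.
Qed.

Lemma grad_s z s tau : 0 < beta ->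
  (forall d, is_derive s d (fun s' => Xi Q c v Vc beta z s' tau) 0) ->
  s = beta *: (hsq z - z).
Proof.
move=> b0 H; apply/matrixP => i j; rewrite (ord1 j).
have := @quad_deriv _ _ _ _ _ _ _ (fun h => Xi_s_shift h (delta_mx i 0) z s tau b0) (H (delta_mx i 0)).
rewrite !dotv_delta !mxE => E.
have -> : s i 0 = beta * (beta^-1 * s i 0) by rewrite mulrA mulfV ?gt_eqF // mul1r.
congr (_ * _); lra.
Qed.

Lemma Xi_Pbeta z s tau : 0 < beta ->
  Xi Q c v Vc beta z s tau = Pbeta Q c beta z + tau * (dotv v z - Vc)
    - sqnorm (s - beta *: (hsq z - z)) / (2 * beta).
Proof.
move=> b0; rewrite /Xi /Pbeta /Gmat /psi qformMD qformMZ qform_Diag /sqnorm.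
rewrite !dotvDl !dotvDr !dotvNl !dotvNr !dotvZl !dotvZr !dotvDl !dotvDr !dotvNl !dotvNr.
rewrite ?(dotvC z s) ?(dotvC z c) ?(dotvC z v) ?(dotvC (hsq z) s) ?(dotvC z (hsq z)).
field; by rewrite gt_eqF.
Qed.

Lemma Xi_Pd z s tau : 0 < beta -> Q^T = Q -> posdef (Gmat Q s) ->
  exists y, Gmat Q s *m y = psi c v s tau /\
  Xi Q c v Vc beta z s tau = Pd Q c v Vc beta s tau + qform (Gmat Q s) (z - y) / 2.
Proof.
move=> b0 sQ PD; set G := Gmat Q s; set p := psi c v s tau.
have uG : G \in unitmx.
  rewrite unitmxE unitfE; apply/negP => /det0P [w w0 wG].
  have w0' : w^T != 0 by apply: contra w0 => /eqP/(congr1 trmx); rewrite trmxK trmx0 => ->.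
  have := PD _ w0'; by rewrite /qform trmxK wG mul0mx mxE ltxx.
set y := invmx G *m p.
have Gy : G *m y = p by rewrite /y mulmxA mulmxV // mul1mx.
exists y; split => //.
have Hq : qform (invmx G) p = qform G y.
  by rewrite qformE -[X in dotv X _]Gy dotvC -qformE.
rewrite /Xi /Pd -/G -/p Hq qform_add ?Gmat_sym // -(scaleN1r y) qformZ -scalemxAr Gy dotvZr.
field; by rewrite gt_eqF.
Qed.

End Lin.

Lemma sqnorm0 (R : realType) (n : nat) : sqnorm (0 : 'cV[R]_n) = 0.
Proof. by rewrite /sqnorm dotvE big1 // => i _; rewrite mxE mul0r. Qed.

Theorem theorem1 (R : realType) (n : nat) (Q : 'M[R]_n) (c v : 'cV[R]_n)
    (Vc beta : R) (zb sb : 'cV[R]_n) (taub : R) :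
  (0 < n)%N -> Q^T = Q -> (forall i, 0 <= v i 0) -> 0 < Vc -> 0 < beta ->
  Sa_plus Q sb taub ->
  KKT_Xi Q c v Vc beta zb sb taub ->
  [/\ Zb v Vc zb /\
        (forall z, Zb v Vc z -> Pbeta Q c beta zb <= Pbeta Q c beta z),
      (forall s tau, Sa_plus Q s tau ->
         Pd Q c v Vc beta s tau <= Pd Q c v Vc beta sb taub),
      Pbeta Q c beta zb = Xi Q c v Vc beta zb sb taub &
      Xi Q c v Vc beta zb sb taub = Pd Q c v Vc beta sb taub].
Proof.
move=> _ sQ _ Vc0 b0 [PDb tb0] [Hz Hs Hf _ Hc].
have Gz := grad_z b0 sQ Hz.
have sE := grad_s b0 Hs.
have E1 : Pbeta Q c beta zb = Xi Q c v Vc beta zb sb taub.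
  rewrite (@Xi_Pbeta R n Q c v Vc beta zb sb taub b0) -sE subrr sqnorm0 Hc mul0r; lra.
have E2 : Xi Q c v Vc beta zb sb taub = Pd Q c v Vc beta sb taub.
  have [y [Gy ->]] := @Xi_Pd R n Q c v Vc beta zb sb taub b0 sQ PDb.
  have -> : qform (Gmat Q sb) (zb - y) = 0.
    by rewrite /qform -mulmxA mulmxBr Gz Gy subrr mulmx0 mxE.
  by rewrite mul0r addr0.
split.
- split => // z Hzf.
  have [y [_ E3]] := @Xi_Pd R n Q c v Vc beta z sb taub b0 sQ PDb.
  have q0 := posdef_ge0 (zb - y) PDb.
  have q1 := posdef_ge0 (z - y) PDb.
  have E4 := @Xi_Pbeta R n Q c v Vc beta z sb taub b0.
  have h1 : taub * (dotv v z - Vc) <= 0.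
    by apply: mulr_ge0_le0; [exact: ltW | rewrite subr_le0].
  have h2 : 0 <= sqnorm (sb - beta *: (hsq z - z)) / (2 * beta).
    by apply: divr_ge0; [exact: sqnorm_ge0 | lra].
  lra.
- move=> s tau [PD t0].
  have [y [_ E3]] := @Xi_Pd R n Q c v Vc beta zb s tau b0 sQ PD.
  have q1 := posdef_ge0 (zb - y) PD.
  have E4 := @Xi_Pbeta R n Q c v Vc beta zb s tau b0.
  have h1 : tau * (dotv v zb - Vc) <= 0.
    by apply: mulr_ge0_le0; [exact: ltW | rewrite subr_le0].
  have h2 : 0 <= sqnorm (s - beta *: (hsq zb - zb)) / (2 * beta).
    by apply: divr_ge0; [exact: sqnorm_ge0 | lra].
  lra.
- exact: E1.
- exact: E2.
Qed.
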